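(* Let $p\in(0,1)$ and let $(\lambda_n)_{n\ge1}$ be a sequence with $\lambda_1=1$ and $0<\lambda_n\le\lambda_{n-1}$ for all $n>1$. Let $r_1,r_2,\dots$ be $\{0,1\}$-valued random variables with $\Pr(r_1=1)=p$ and, for every $n\ge2$, $\Pr(r_n=1\mid r_1,\dots,r_{n-1})=\lambda_n p+(1-\lambda_n)\bar p_{n-1}$, where $\bar p_m=\frac1m\sum_{i=1}^m r_i$. Define $\hat r_1=r_1$, $\hat r_i=\frac{r_i-(1-\lambda_i)\bar p_{i-1}}{\lambda_i}$ for $i\ge2$, and for weights $\omega_1,\dots,\omega_n>0$ let $\hat p_n=\frac{\sum_{i=1}^n\omega_i\hat r_i}{\sum_{i=1}^n\omega_i}$. Then \[\mathrm{Var}[\hat p_n]=\frac{1}{\big(\sum_{i=1}^n\omega_i\big)^2}\sum_{i=1}^n\frac{\omega_i^2}{\lambda_i^2}\Big(p(1-p)-(1-\lambda_i)^2\,\mathrm{Var}[\bar p_{i-1}]\Big),\] where the $i=1$ term is read as $\omega_1^2\,p(1-p)$ (since $1-\lambda_1=0$). *)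

(* Defs.v *)
From HB Require Import structures.
From mathcomp Require Import all_boot all_order all_algebra.
From mathcomp Require Import all_classical all_reals all_analysis.
Set Implicit Arguments. Unset Strict Implicit. Unset Printing Implicit Defensive.
Import Order.TTheory GRing.Theory Num.Theory.
Local Open Scope ring_scope.

(* Random variables are indexed from 1: r 1, r 2, ... (r 0 is unused). *)

(* running mean  \bar p_m = (1/m) \sum_{i=1}^m r_i  (with \bar p_0 := 0) *)
Definition barp {R : realType} {T : Type} (r : nat -> T -> R) (m : nat) : T -> R :=
  fun w => (\sum_(1 <= i < m.+1) r i w) / m%:R.

Definition rhat {R : realType} {T : Type} (lam : nat -> R) (r : nat -> T -> R)
  (i : nat) : T -> R :=
  fun w => if i == 1%N then r 1%N w
           else (r i w - (1 - lam i) * barp r i.-1 w) / lam i.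

Definition phat {R : realType} {T : Type} (lam : nat -> R) (r : nat -> T -> R)
  (om : nat -> R) (n : nat) : T -> R :=
  fun w => (\sum_(1 <= i < n.+1) om i * rhat lam r i w) / (\sum_(1 <= i < n.+1) om i).

Definition history {R : realType} {T : Type} (r : nat -> T -> R) (n : nat)
  (h : nat -> R) : set T :=
  [set w | forall i, (1 <= i < n)%N -> r i w = h i].

(* Main.v *)
Require Import Defs.
From HB Require Import structures.
From mathcomp Require Import all_boot all_order all_algebra.
From mathcomp Require Import all_classical all_reals all_analysis.
From mathcomp Require Import ring lra.
Import Order.TTheory GRing.Theory Num.Theory.
Local Open Scope ring_scope.
Local Open Scope classical_set_scope.
Set Implicit Arguments. Unset Strict Implicit.
Section Gen.
Context (R : realType) (d : measure_display) (T : measurableType d) (P : probability T R).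

Definition bm (f : T -> R) := measurable_fun setT f /\ exists M : R, forall w, `|f w| <= M.
Definition Ex (f : T -> R) : R := fine ('E_P[f])%E.

Lemma bm_int f : bm f -> P.-integrable setT (EFin \o f).
Proof.
move=> [mf [M hM]]; apply: measurable_bounded_integrable => //.
  by apply: (le_lt_trans (probability_le1 P measurableT)); rewrite ltry.
exists M; split; first exact: num_real.
by move=> x Mx y _; apply: le_trans (hM y) (ltW Mx).
Qed.

Lemma bmL1 f : bm f -> f \in Lfun P 1%E.
Proof. by move=> bf; apply/Lfun1_integrable; exact: bm_int. Qed.

Lemma EE f : bm f -> ('E_P[f] = (Ex f)%:E)%E.
Proof.
move=> bf; rewrite /Ex fineK //. exact: expectation_fin_num (bmL1 bf).
Qed.

Lemma bm_ext f g : bm f -> (forall w, f w = g w) -> bm g.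
Proof. by move=> bf h; have <- : f = g by apply: funext. Qed.

Lemma bm_cst c : bm (fun _ => c).
Proof. split; first exact: measurable_cst. by exists `|c|. Qed.

Lemma bmD f g : bm f -> bm g -> bm (fun w => f w + g w).
Proof.
move=> [mf [M hM]] [mg [N hN]]; split; first exact: measurable_realfun.measurable_funD.
exists (M + N) => w; apply: le_trans (ler_normD _ _) _; exact: lerD.
Qed.

Lemma bmM f g : bm f -> bm g -> bm (fun w => f w * g w).
Proof.
move=> [mf [M hM]] [mg [N hN]]; split; first exact: measurable_realfun.measurable_funM.
exists (M * N) => w; rewrite normrM; apply: ler_pM => //.
Qed.

Lemma bmN f : bm f -> bm (fun w => - f w).
Proof.
move=> bf; apply: bm_ext (bmM (bm_cst (-1)) bf) _ => w; by rewrite mulN1r.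
Qed.

Lemma bm_sum (F : nat -> T -> R) a b : (forall i, (a <= i < b)%N -> bm (F i)) ->
  bm (fun w => \sum_(a <= i < b) F i w).
Proof.
elim: b => [|b IH] H.
  by apply: bm_ext (bm_cst 0) _ => w; rewrite big_geq.
case: (leqP a b) => ab.
  apply: bm_ext (bmD (IH _) (H b _)) _.
  - by move=> i /andP[ai ib]; apply: H; rewrite ai ltnS ltnW.
  - by rewrite ab leqnn.
  - by move=> w; rewrite big_nat_recr.
by apply: bm_ext (bm_cst 0) _ => w; rewrite big_geq.
Qed.

Lemma bm_indic A : measurable A -> bm (\1_A : T -> R).
Proof.
move=> mA; split; first exact: measurable_realfun.measurable_indic.
by exists 1 => w; rewrite /indic; case: (_ \in _); rewrite ?normr1 ?normr0.
Qed.

Lemma Ex_ext f g : (forall w, f w = g w) -> Ex f = Ex g.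
Proof. by move=> h; congr Ex; apply: funext. Qed.

Lemma Ex_cst c : Ex (fun _ => c) = c.
Proof. by rewrite /Ex (expectation_cst P c). Qed.

Lemma ExD f g : bm f -> bm g -> Ex (fun w => f w + g w) = Ex f + Ex g.
Proof.
move=> bf bg; rewrite /Ex (expectationD (bmL1 bf) (bmL1 bg)) (EE bf) (EE bg).
by [].
Qed.

Lemma ExZ c f : bm f -> Ex (fun w => c * f w) = c * Ex f.
Proof.
move=> bf; have -> : (fun w => c * f w) = c \o* f.
  by apply: funext => w /=; rewrite mulrC.
by rewrite /Ex (expectationZl c (bmL1 bf)) (EE bf).
Qed.

Lemma ExN f : bm f -> Ex (fun w => - f w) = - Ex f.
Proof.
move=> bf; rewrite -mulN1r -ExZ //; congr Ex; apply: funext => w; by rewrite mulN1r.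
Qed.

Lemma ExB f g : bm f -> bm g -> Ex (fun w => f w - g w) = Ex f - Ex g.
Proof. by move=> bf bg; rewrite ExD ?ExN //; exact: bmN. Qed.

Lemma Ex_sum (F : nat -> T -> R) a b : (forall i, (a <= i < b)%N -> bm (F i)) ->
  Ex (fun w => \sum_(a <= i < b) F i w) = \sum_(a <= i < b) Ex (F i).
Proof.
elim: b => [|b IH] H.
  transitivity (Ex (fun _ => 0)); first by apply: Ex_ext => w; rewrite big_geq.
  by rewrite Ex_cst big_geq.
case: (leqP a b) => ab.
  have H' : forall i, (a <= i < b)%N -> bm (F i).
    by move=> i /andP[ai ib]; apply: H; rewrite ai ltnS ltnW.
  rewrite big_nat_recr //= -IH // -ExD; [|exact: bm_sum|]; last by apply: H; rewrite ab leqnn.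
  by apply: Ex_ext => w; rewrite big_nat_recr.
transitivity (Ex (fun _ => 0)); first by apply: Ex_ext => w; rewrite big_geq // ltnW.
by rewrite Ex_cst big_geq // ltnW.
Qed.

Lemma Ex_indic A : measurable A -> Ex (\1_A) = fine (P A).
Proof. by move=> mA; rewrite /Ex expectation_indic. Qed.


End Gen.
Arguments bm_cst {R d T} c.
Arguments Ex_cst {R d T P} c.
Arguments ExZ {R d T P} c [f].
Arguments ExD {R d T P} [f g].
Arguments ExB {R d T P} [f g].
Arguments ExN {R d T P} [f].
Arguments Ex_sum {R d T P} [F a b].
Arguments Ex_indic {R d T P} [A].
Arguments Ex_ext {R d T P} [f g].
Arguments EE {R d T P} [f].

Section Main.
Context (R : realType) (d : measure_display) (T : measurableType d)
  (P : probability T R) (p : R) (lam : nat -> R) (r : nat -> {RV P >-> R}).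
Hypothesis Hlam1 : lam 1%N = 1.
Hypothesis Hlam : forall k, (1 < k)%N -> 0 < lam k <= lam k.-1.
Hypothesis H01 : forall k w, (1 <= k)%N -> r k w = 0 \/ r k w = 1.
Hypothesis Hr1 : P [set w | r 1%N w = 1] = p%:E.
Hypothesis Hcond : forall k (h : nat -> R), (2 <= k)%N ->
     P (history (fun i => r i : T -> R) k h `&` [set w | r k w = 1]) =
     ((lam k * p + (1 - lam k) * ((\sum_(1 <= i < k) h i) / k.-1%:R))%:E
        * P (history (fun i => r i : T -> R) k h))%E.

Local Notation Ex := (Ex P).
Local Notation bm := (bm (T:=T) (R:=R)).

Definition bp m : T -> R := barp (fun i => r i : T -> R) m.
Definition q k : T -> R := fun w => lam k * p + (1 - lam k) * bp k.-1 w.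
Definition adapted k (G : T -> R) :=
  forall w w', (forall i, (1 <= i < k)%N -> r i w = r i w') -> G w = G w'.

Lemma bm_r k : (1 <= k)%N -> bm (r k).
Proof.
move=> k1; split; first exact: measurable_funPT.
by exists 1 => w; case: (H01 w k1) => ->; rewrite ?normr0 ?normr1.
Qed.

Lemma bm_bp m : bm (bp m).
Proof.
have h1 : bm (fun w => \sum_(1 <= i < m.+1) r i w).
  by apply: bm_sum => i /andP[i1 _]; exact: bm_r.
by apply: bm_ext (bmM h1 (bm_cst m%:R^-1)) _ => w.
Qed.

Lemma bm_q k : bm (q k).
Proof. exact: bmD (bm_cst _) (bmM (bm_cst _) (bm_bp _)). Qed.

Definition Fs k m (h : nat -> R) := [set w | forall i, (m <= i < k)%N -> r i w = h i].

Lemma Fs_meas k m h : measurable (Fs k m h).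
Proof.
have -> : Fs k m h = \bigcap_i (if (m <= i < k)%N then (r i) @^-1` [set h i] else setT).
  apply/seteqP; split => w /=.
    by move=> H i _; case: ifP => // /H.
  by move=> H i hi; have := H i I; rewrite hi.
by apply: bigcapT_measurable => i; case: ifP => _ //.
Qed.

Lemma meas_r1 k : measurable [set w | r k w = 1].
Proof. exact: measurable_funPTI (r k) _ (measurable_set1 1). Qed.

Lemma cond_all k h : (1 <= k)%N ->
  P (Fs k 1 h `&` [set w | r k w = 1]) =
  ((lam k * p + (1 - lam k) * ((\sum_(1 <= i < k) h i) / k.-1%:R))%:E * P (Fs k 1 h))%E.
Proof.
case: k => // -[_|k _]; last exact: Hcond.
have -> : Fs 1 1 h = setT.
  by apply/seteqP; split => // w _ i /andP[a b]; move: (leq_trans a b).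
by rewrite setTI Hr1 probability_setT Hlam1 subrr mul0r addr0 mul1r mule1.
Qed.


Lemma indic_split k m h w : (1 <= m)%N -> (m < k)%N ->
  \1_(Fs k m.+1 h) w = \1_(Fs k m (fun i => if i == m then 0 else h i)) w
     + \1_(Fs k m (fun i => if i == m then 1 else h i)) w :> R.
Proof.
move=> m1 mk; rewrite !indicE.
have [Hw|Hw] := pselect (Fs k m.+1 h w).
  have Hv : forall v : R, r m w = v -> Fs k m (fun i => if i == m then v else h i) w.
    move=> v rv i /andP[mi ik]; case: eqP => [->//|/eqP ne]; apply: Hw.
    by rewrite ik andbT ltn_neqAle eq_sym ne mi.
  have Hnv : forall v : R, r m w <> v -> ~ Fs k m (fun i => if i == m then v else h i) w.
    by move=> v rv /(_ m); rewrite leqnn mk eqxx => /(_ isT).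
  rewrite (mem_set Hw); case: (H01 w m1) => rm.
    rewrite (mem_set (Hv _ rm)) (memNset (Hnv 1 _)) ?addr0 // rm.
    by move/eqP; rewrite eq_sym oner_eq0.
  rewrite (memNset (Hnv 0 _)) ?(mem_set (Hv _ rm)) ?add0r // rm.
  by move/eqP; rewrite oner_eq0.
have Hn : forall v : R, ~ Fs k m (fun i => if i == m then v else h i) w.
  move=> v Hv; apply: Hw => i /andP[mi ik]; have := Hv i; rewrite (ltnW mi) ik /=.
  by case: eqP => [e|_ ->//]; rewrite e ltnn in mi.
by rewrite (memNset Hw) !memNset // addr0.
Qed.

Lemma K k G : (1 <= k)%N -> bm G -> adapted k G ->
  Ex (fun w => r k w * G w) = Ex (fun w => q k w * G w).
Proof.
move=> k1 bG aG.
have step : forall m, (1 <= m <= k)%N -> forall h,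
    Ex (fun w => r k w * G w * \1_(Fs k m h) w) =
    Ex (fun w => q k w * G w * \1_(Fs k m h) w).
  elim=> [//|m IH] /andP[_ mk] h.
  case: (posnP m) => [m0|m0].
    subst m.
    set H := Fs k 1 h.
    have [c Hc] : exists c, forall w, G w * \1_H w = c * \1_H w.
      have [[w0 Hw0]|N] := pselect (exists w0, H w0).
        exists (G w0) => w; rewrite indicE; have [Hw|Hw] := pselect (H w).
          rewrite (mem_set Hw); congr (_ * _); apply: aG => i hi.
          by rewrite Hw // Hw0.
        by rewrite (memNset Hw) !mulr0.
      exists 0 => w; rewrite indicE memNset ?mulr0 // => Hw; apply: N; by exists w.
    set qh := lam k * p + (1 - lam k) * ((\sum_(1 <= i < k) h i) / k.-1%:R).
    have E1 : forall w, r k w * G w * \1_H w = c * \1_(H `&` [set w | r k w = 1]) w.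
      move=> w; rewrite -mulrA Hc mulrCA; congr (_ * _); rewrite !indicE.
      have [Hw|Hw] := pselect (H w).
        rewrite (mem_set Hw); case: (H01 w k1) => rk.
          rewrite rk mul0r memNset // => -[_ /=]; rewrite rk.
          by move/eqP; rewrite eq_sym oner_eq0.
        by rewrite rk mul1r mem_set.
      by rewrite !memNset ?mulr0 // => -[].
    have E2 : forall w, q k w * G w * \1_H w = (c * qh) * \1_H w.
      move=> w; rewrite -mulrA Hc mulrCA -mulrA; congr (_ * _).
      rewrite indicE; have [Hw|Hw] := pselect (H w); last by rewrite memNset ?mulr0.
      rewrite mem_set //; congr (_ * _); rewrite /q /bp /barp /qh prednK //.
      congr (_ + _ * (_ / _)); apply: eq_big_nat => i hi; exact: Hw.
    have mH : measurable H by exact: Fs_meas.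
    have fH : P H = (fine (P H))%:E by rewrite fineK // fin_num_measure.
    have mHA : measurable (H `&` [set w | r k w = 1]) by exact: measurableI (meas_r1 _).
    rewrite (Ex_ext E1) (Ex_ext E2).
    rewrite !ExZ; [|exact: bm_indic ..].
    rewrite /Ex !expectation_indic //.
    by rewrite cond_all // fH -EFinM /= mulrA.
  have mk' : (m < k)%N by [].
  have Ssp : forall X, bm X -> Ex (fun w => X w * \1_(Fs k m.+1 h) w) =
      Ex (fun w => X w * \1_(Fs k m (fun i => if i == m then 0 else h i)) w) +
      Ex (fun w => X w * \1_(Fs k m (fun i => if i == m then 1 else h i)) w).
    move=> X bX; rewrite -ExD; [|apply: bmM => //; apply: bm_indic; exact: Fs_meas ..].
    by apply: Ex_ext => w; rewrite indic_split // mulrDr.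
  rewrite Ssp; last exact: bmM (bm_r k1) bG.
  rewrite Ssp; last exact: bmM (bm_q k) bG.
  by rewrite !IH // m0 ltnW.
have HT : forall w, Fs k k (fun _ => 0) w.
  by move=> w i /andP[a b]; rewrite ltnNge a in b.
have E3 : forall X : T -> R, Ex (fun w => X w * \1_(Fs k k (fun _ => 0)) w) = Ex X.
  by move=> X; apply: Ex_ext => w; rewrite indicE mem_set ?mulr1.
rewrite -(E3 (fun w => r k w * G w)) -(E3 (fun w => q k w * G w)).
by apply: step; rewrite k1 leqnn.
Qed.


Definition D i : T -> R := fun w => (r i w - q i w) / lam i.
Definition Sm (om : nat -> R) n : T -> R := fun w => \sum_(1 <= i < n.+1) om i * D i w.

Lemma lam_gt0 i : (1 <= i)%N -> 0 < lam i.
Proof.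
case: i => // -[_|i _]; first by rewrite Hlam1.
by case/andP: (Hlam (isT : (1 < i.+2)%N)).
Qed.

Lemma lam_neq0 i : (1 <= i)%N -> lam i != 0.
Proof. by move=> i1; rewrite gt_eqF // lam_gt0. Qed.

Lemma ad_bp m k : (m < k)%N -> adapted k (bp m).
Proof.
move=> mk w w' H; rewrite /bp /barp; congr (_ / _); apply: eq_big_nat => i /andP[a b].
by apply: H; rewrite a (leq_trans b mk).
Qed.

Lemma ad_q j k : (1 <= j <= k)%N -> adapted k (q j).
Proof.
case/andP=> j1 jk w w' H; rewrite /q (ad_bp (k := k) _ H) //.
by rewrite prednK // (leq_trans _ jk).
Qed.

Lemma ad_D j k : (1 <= j < k)%N -> adapted k (D j).
Proof.
case/andP=> j1 jk w w' H; rewrite /D (ad_q (j := j) (k := k) _ H); last by rewrite j1 ltnW.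
by rewrite H // j1.
Qed.

Lemma ad_S om n k : (n < k)%N -> adapted k (Sm om n).
Proof.
move=> nk w w' H; apply: eq_big_nat => i /andP[a b]; congr (_ * _).
by apply: (ad_D (j := i) (k := k) _ H); rewrite a (leq_trans b nk).
Qed.

Lemma K0 k G : (1 <= k)%N -> bm G -> adapted k G ->
  Ex (fun w => (r k w - q k w) * G w) = 0.
Proof.
move=> k1 bG aG.
rewrite (Ex_ext (g := fun w => r k w * G w - q k w * G w)); last by move=> w; rewrite mulrBl.
by rewrite ExB ?K ?subrr //; apply: bmM => //; [exact: bm_r | exact: bm_q].
Qed.

Lemma bm_D i : (1 <= i)%N -> bm (D i).
Proof.
move=> i1; apply: bm_ext (bmM (bmD (bm_r i1) (bmN (bm_q i))) (bm_cst (lam i)^-1)) _ => w.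
by [].
Qed.

Lemma bm_S om n : bm (Sm om n).
Proof.
by apply: bm_sum => i /andP[i1 _]; apply: bmM; [exact: bm_cst | exact: bm_D].
Qed.

Lemma Ex_q k : Ex (q k) = lam k * p + (1 - lam k) * Ex (bp k.-1).
Proof.
rewrite /q ExD; [|exact: bm_cst|exact: bmM (bm_cst _) (bm_bp _)].
by rewrite Ex_cst ExZ //; exact: bm_bp.
Qed.

Lemma Ex_bp m : Ex (bp m) = (\sum_(1 <= i < m.+1) Ex (r i)) / m%:R.
Proof.
rewrite (Ex_ext (g := fun w => m%:R^-1 * \sum_(1 <= i < m.+1) r i w)); last first.
  by move=> w; rewrite /bp /barp mulrC.
rewrite ExZ; last by apply: bm_sum => i /andP[i1 _]; exact: bm_r.
rewrite Ex_sum; last by move=> i /andP[i1 _]; exact: bm_r.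
by rewrite mulrC.
Qed.

Lemma Ex_rq k : (1 <= k)%N -> Ex (r k) = Ex (q k).
Proof.
move=> k1; have := K k1 (bm_cst 1) (fun w w' _ => erefl).
by rewrite (Ex_ext (g := r k)) ?(Ex_ext (f := fun w => q k w * 1) (g := q k)) // => w; rewrite mulr1.
Qed.

Lemma Ex_r_all n : forall k, (1 <= k <= n)%N -> Ex (r k) = p.
Proof.
elim: n => [k /andP[a b]|n IH k /andP[k1 kn]]; first by move: (leq_trans a b).
rewrite Ex_rq // Ex_q.
case: (ltnP 1 k) => k2; last first.
  have -> : k = 1%N by apply/eqP; rewrite eqn_leq k1 k2.
  by rewrite Hlam1 subrr mul0r addr0 mul1r.
rewrite Ex_bp prednK; last exact: ltnW.
rewrite (eq_big_nat _ _ (F2 := fun _ => p)); last first.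
  move=> i /andP[i1 ik]; apply: IH; rewrite i1 /=.
  by rewrite -ltnS (leq_trans ik).
rewrite sumr_const_nat subn1 -[p *+ _]mulr_natr mulfK; last first.
  by rewrite pnatr_eq0 -lt0n -ltnS prednK // ltnW.
by rewrite mulrBl mul1r addrC subrK.
Qed.

Lemma Ex_r k : (1 <= k)%N -> Ex (r k) = p.
Proof. by move=> k1; apply: (Ex_r_all (n := k)); rewrite k1 leqnn. Qed.

Lemma Ex_q1 k : (1 <= k)%N -> Ex (q k) = p.
Proof. by move=> k1; rewrite -Ex_rq // Ex_r. Qed.

Lemma Ex_sq X : bm X ->
  Ex (fun w => X w * X w) = Ex X ^+ 2 + Ex (fun w => (X w - Ex X) * (X w - Ex X)).
Proof.
move=> bX; set c := Ex X.
rewrite (Ex_ext (f := fun w => (X w - c) * (X w - c))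
   (g := fun w => X w * X w + (- (2 * c) * X w + c ^+ 2))); last by move=> w; ring.
rewrite ExD; [|exact: (bmM bX bX)|exact: bmD (bmM (bm_cst _) bX) (bm_cst _)].
rewrite ExD; [|exact: bmM (bm_cst _) bX|exact: bm_cst].
rewrite ExZ // Ex_cst -/c; ring.
Qed.

Definition V m := Ex (fun w => (bp m w - Ex (bp m)) * (bp m w - Ex (bp m))).

Lemma Ex_D2 i : (1 <= i)%N ->
  Ex (fun w => D i w * D i w) = (p * (1 - p) - (1 - lam i) ^+ 2 * V i.-1) / lam i ^+ 2.
Proof.
move=> i1.
have r2 : forall w, r i w * r i w = r i w.
  by move=> w; case: (H01 w i1) => ->; rewrite ?mulr0 ?mulr1.
have bq := bm_q i; have br := bm_r i1.
have aq : adapted i (q i) by apply: ad_q; rewrite i1 leqnn.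
rewrite (Ex_ext (g := fun w => (lam i ^+ 2)^-1 * ((r i w - q i w) * r i w - (r i w - q i w) * q i w))); last first.
  by move=> w; rewrite /D -exprVn; ring.
rewrite ExZ; last by apply: bmD (bmM (bmD br (bmN bq)) br) (bmN (bmM (bmD br (bmN bq)) bq)).
rewrite ExB; [|exact: bmM (bmD br (bmN bq)) br|exact: bmM (bmD br (bmN bq)) bq].
rewrite (K0 i1 bq aq) subr0 mulrC; congr (_ / _).
rewrite (Ex_ext (g := fun w => r i w * (1 - q i w))); last first.
  by move=> w; rewrite mulrBl r2 mulrBr mulr1 [q i w * _]mulrC.
rewrite K //; last 2 first.
- exact: bmD (bm_cst 1) (bmN bq).
- by move=> w w' H; rewrite (aq w w' H).
rewrite (Ex_ext (g := fun w => q i w - q i w * q i w)); last by move=> w; rewrite mulrBr mulr1.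
rewrite ExB //; last exact: bmM.
rewrite Ex_sq // Ex_q1 //.
rewrite (Ex_ext (g := fun w => (1 - lam i) ^+ 2 * ((bp i.-1 w - Ex (bp i.-1)) * (bp i.-1 w - Ex (bp i.-1))))); last first.
  move=> w; rewrite -(Ex_q1 i1) Ex_q /q; ring.
rewrite ExZ; last by apply: bmM; apply: bmD (bm_bp _) (bm_cst _).
rewrite /V; ring.
Qed.

Lemma VE X : bm X -> 'V_P[X] = (Ex (fun w => (X w - Ex X) * (X w - Ex X)))%:E.
Proof.
move=> bX; rewrite /variance covariance.unlock /= (EE bX) /=.
have bY : bm (fun w => (X w - Ex X) * (X w - Ex X)).
  by apply: bmM; apply: bmD bX (bm_cst _).
by rewrite (EE bY).
Qed.

Lemma Ex_SS om n : Ex (fun w => Sm om n w * Sm om n w) =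
  \sum_(1 <= i < n.+1) om i ^+ 2 * Ex (fun w => D i w * D i w).
Proof.
elim: n => [|n IH].
  rewrite big_geq // (Ex_ext (g := fun _ => 0)) ?Ex_cst // => w.
  by rewrite /Sm big_geq // mulr0.
have bD := bm_D (ltn0Sn n).
rewrite (Ex_ext (g := fun w => Sm om n w * Sm om n w +
    ((2 * om n.+1 / lam n.+1) * ((r n.+1 w - q n.+1 w) * Sm om n w)
     + om n.+1 ^+ 2 * (D n.+1 w * D n.+1 w)))); last first.
  by move=> w; rewrite /Sm big_nat_recr //= /D; ring.
rewrite ExD; last 2 first.
- exact: bmM (bm_S _ _) (bm_S _ _).
- apply: bmD; apply: bmM; try exact: bm_cst.
    exact: bmM (bmD (bm_r (ltn0Sn n)) (bmN (bm_q _))) (bm_S _ _).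
  exact: bmM.
rewrite ExD; last 2 first.
- apply: bmM; first exact: bm_cst.
  exact: bmM (bmD (bm_r (ltn0Sn n)) (bmN (bm_q _))) (bm_S _ _).
- exact: bmM (bm_cst _) (bmM bD bD).
rewrite ExZ; last exact: bmM (bmD (bm_r (ltn0Sn n)) (bmN (bm_q _))) (bm_S _ _).
rewrite K0 //; [|exact: bm_S|exact: ad_S].
rewrite ExZ; last exact: bmM.
by rewrite mulr0 add0r IH [in RHS]big_nat_recr.
Qed.


Lemma final om n :
  'V_P[phat lam (fun i => r i : T -> R) om n] =
  (((\sum_(1 <= i < n.+1) om i) ^+ 2)^-1%:E *
   \sum_(1 <= i < n.+1)
     ((om i ^+ 2 / lam i ^+ 2)%:E *
      ((p * (1 - p))%:E
       - ((1 - lam i) ^+ 2)%:E * 'V_P[barp (fun j => r j : T -> R) i.-1])))%E.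
Proof.
set W := \sum_(1 <= i < n.+1) om i.
have rh : forall i w, (1 <= i)%N -> rhat lam (fun i => r i : T -> R) i w = D i w + p.
  move=> i w i1; rewrite /rhat /D /q; case: eqP => [->|/eqP ne].
    by rewrite Hlam1 subrr mul0r addr0 mul1r divr1; ring.
  have l0 := lam_neq0 i1.
  rewrite /bp -[X in _ = _ + X](mulfK l0) -mulrDl; congr (_ / _); ring.
have ph : forall w, phat lam (fun i => r i : T -> R) om n w = W^-1 * Sm om n w + p * W / W.
  move=> w; rewrite /phat /Sm [W^-1 * _]mulrC -mulrDl; congr (_ / _).
  rewrite /W mulr_sumr -big_split /=; apply: eq_big_nat => i /andP[i1 _].
  by rewrite rh //; ring.
have bph : bm (phat lam (fun i => r i : T -> R) om n).
  apply: bm_ext (bmD (bmM (bm_cst W^-1) (bm_S om n)) (bm_cst (p * W / W))) _.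
  by move=> w; rewrite ph.
have ED : forall i, (1 <= i)%N -> Ex (D i) = 0.
  move=> i i1; rewrite (Ex_ext (g := fun w => (r i w - q i w) * (lam i)^-1)) //.
  by rewrite K0 //; exact: bm_cst.
have ES : Ex (Sm om n) = 0.
  rewrite /Sm Ex_sum; last by move=> i /andP[i1 _]; apply: bmM; [exact: bm_cst|exact: bm_D].
  rewrite big_nat big1 // => i /andP[i1 _].
  by rewrite ExZ ?ED ?mulr0 //; apply: bm_D.
have Eph : Ex (phat lam (fun i => r i : T -> R) om n) = p * W / W.
  rewrite (Ex_ext ph) ExD; [|exact: bmM (bm_cst _) (bm_S _ _)|exact: bm_cst].
  by rewrite (ExZ W^-1) ?ES ?mulr0 ?add0r ?Ex_cst //; apply: bm_S.
rewrite VE // Eph.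
rewrite (Ex_ext (g := fun w => (W^-1)^+2 * (Sm om n w * Sm om n w))); last first.
  by move=> w; rewrite ph; ring.
rewrite ExZ; last by apply: bmM; exact: bm_S.
rewrite Ex_SS.
rewrite (@eq_big_nat _ _ _ 1 n.+1 _ (fun i => (om i ^+ 2 * Ex (fun w => D i w * D i w))%:E)); last first.
  move=> i /andP[i1 _]; rewrite Ex_D2 // VE; last exact: bm_bp.
  by rewrite -EFinM; congr EFin; rewrite /V /bp; ring.
by rewrite sumEFin -EFinM exprVn.
Qed.

End Main.

Theorem theoremA13 (R : realType) (d : measure_display) (T : measurableType d)
  (P : probability T R) (p : R) (lam : nat -> R) (r : nat -> {RV P >-> R})
  (om : nat -> R) (n : nat) :
  0 < p < 1 ->
  lam 1%N = 1 ->
  (forall k, (1 < k)%N -> 0 < lam k <= lam k.-1) ->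
  (forall k w, (1 <= k)%N -> r k w = 0 \/ r k w = 1) ->
  P [set w | r 1%N w = 1] = p%:E ->
  (forall k (h : nat -> R), (2 <= k)%N ->
     P (history (fun i => r i : T -> R) k h `&` [set w | r k w = 1]) =
     ((lam k * p + (1 - lam k) * ((\sum_(1 <= i < k) h i) / k.-1%:R))%:E
        * P (history (fun i => r i : T -> R) k h))%E) ->
  (forall i, (1 <= i <= n)%N -> 0 < om i) ->
  'V_P[phat lam (fun i => r i : T -> R) om n] =
  (((\sum_(1 <= i < n.+1) om i) ^+ 2)^-1%:E *
   \sum_(1 <= i < n.+1)
     ((om i ^+ 2 / lam i ^+ 2)%:E *
      ((p * (1 - p))%:E
       - ((1 - lam i) ^+ 2)%:E * 'V_P[barp (fun j => r j : T -> R) i.-1])))%E.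
Proof.
move=> _ Hl1 Hl H0 Hr Hc _.
exact: (final Hl1 Hl H0 Hr Hc).
Qed.
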